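(* Let $\theta>1$, $r\in(\theta^{-1},\theta^{-1/2}]$ and $s=\max\big(1,\frac{\ln\theta}{\ln(r\theta)}-2\big)$. Suppose the random price sequence has maximum $P^*=p^*$ almost surely for a fixed $p^*\in[1,\theta]$, and let $Y$ be a random prediction with values in $[1,\theta]$. Then \[ \frac{\mathbb{E}[\mathsf{A}^1_r(P,Y)]}{\mathbb{E}[P^*]}\ \ge\ \frac{1}{r\theta}\,\Lambda(p^* ),\qquad \Lambda(p^* ):=\mathbb{E}\big[\mathcal{E}(p^*,Y)^{s}\big]. \]
   Context: One-max search: fix $\theta>1$. Prices $p_1,\dots,p_n\in[1,\theta]$ are revealed one at a time; the algorithm receives at the start a prediction $y\in[1,\theta]$ of the maximum price. At each step it irrevocably accepts the current price (payoff = that price) or rejects it; if nothing is accepted the payoff is $1$. Let $\varphi_r(z)=\frac{r\theta-1}{1-r}+\frac{1-r^2\theta}{1-r}\cdot\frac{z}{r\theta}$ and $\Phi^1_r(z)=\max(r\theta,\varphi_r(z))$; $\mathsf{A}^1_r$ accepts the first price $p_i\ge\Phi^1_r(y)$, and $\mathsf{A}^1_r(P,Y)$ is its payoff on the realized (random) prices and prediction. $\mathcal{E}(a,b)=\min\{a/b,b/a\}$. *)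

(* Defs.v *)
From HB Require Import structures.
From mathcomp Require Import all_boot all_order all_algebra.
From mathcomp Require Import all_classical all_reals all_analysis.
Set Implicit Arguments. Unset Strict Implicit. Unset Printing Implicit Defensive.
Import Order.TTheory GRing.Theory Num.Theory.
Import numFieldNormedType.Exports.
Local Open Scope ring_scope.

Section OneMax.
Variable R : realType.

Definition varphi (theta r z : R) : R :=
  (r * theta - 1) / (1 - r) + (1 - r ^+ 2 * theta) / (1 - r) * (z / (r * theta)).

Definition Phi1 (theta r z : R) : R := Num.max (r * theta) (varphi theta r z).

Fixpoint threshold_payoff (thr : R) (s : seq R) : R :=
  match s with
  | [::] => 1
  | x :: s' => if thr <= x then x else threshold_payoff thr s'
  end.

Definition A1 (theta r : R) (n : nat) (p : 'I_n -> R) (y : R) : R :=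
  threshold_payoff (Phi1 theta r y) [seq p i | i <- enum 'I_n].

(* maximum price P^* = max_i p_i (the default 1 is irrelevant for n >= 1 and
   prices in [1, theta]) *)
Definition maxprice (n : nat) (p : 'I_n -> R) : R := \big[Num.max/1]_(i < n) p i.

Definition calE (a b : R) : R := Num.min (a / b) (b / a).

Definition sexp (theta r : R) : R := Num.max 1 (ln theta / ln (r * theta) - 2).

End OneMax.

(* Main.v *)
Require Import Defs.
From HB Require Import structures.
From mathcomp Require Import all_boot all_order all_algebra.
From mathcomp Require Import all_classical all_reals all_analysis.
From mathcomp Require Import ring lra.
Import Order.TTheory GRing.Theory Num.Theory.
Import numFieldNormedType.Exports.
Local Open Scope ring_scope.
Section S. Variable R : realType.
Implicit Types x y z : R.

Lemma chord (q B x : R) : 1 <= q -> 1 < B -> 1 <= x <= B ->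
  x `^ q <= 1 + (x - 1) / (B - 1) * (B `^ q - 1).
Proof.
move=> q1 B1 /andP[x1 xB].
have t0 : 0 <= (x - 1) / (B - 1) by apply: divr_ge0; lra.
have t1 : (x - 1) / (B - 1) <= 1 by rewrite ler_pdivrMr; lra.
have := @convex_powR R q q1 (Itv01 t0 t1) B 1.
rewrite !inE /= !in_itv /= !andbT.
move=> /(_ (ltW (lt_trans ltr01 B1)) ler01).
rewrite convRE /= /unstable.onem => H.
have Ex : (x - 1) / (B - 1) * B + (1 - (x - 1) / (B - 1)) * 1 = x.
  by field; rewrite subr_eq0 gt_eqF.
rewrite -{1}Ex. refine (le_trans H _).
rewrite powR1; lra.
Qed.

Lemma core {th a s p y : R} : 1 < a -> a * a <= th -> 1 <= s ->
  th <= a `^ (s + 2) -> a < p -> y <= th ->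
  (p - a) * a * (th - a) < (th - a * a) * (y - a) ->
  p * (p / y) `^ s <= a.
Proof.
move=> a1 aa s1 thas ap yth key.
have a0 : 0 < a by lra.
have tha : a < th by nra.
have thaa : a * a < th.
  rewrite lt_neqAle aa andbT; apply/negP => /eqP E; move: key; rewrite -E subrr mul0r.
  have : 0 < (p - a) * a * (a * a - a) by rewrite !mulr_gt0 //; nra.
  lra.
have ya : a < y.
  rewrite ltNge; apply/negP => ya.
  have : 0 < (p - a) * a * (th - a) by rewrite !mulr_gt0 //; lra.
  have : (th - a * a) * (y - a) <= 0 by rewrite mulr_ge0_le0 //; lra.
  lra.
pose B := th / (a * a).
have B1 : 1 < B by rewrite /B ltr_pdivlMr; nra.
pose u := p / a. pose v := y / a.
have u1 : 1 <= u by rewrite /u ler_pdivlMr; lra.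
have pa_th : p * a < th by nra.
have uB : u <= B.
  rewrite /u /B ler_pdivrMr // mulrAC ler_pdivlMr; nra.
pose q := 1 + s^-1.
have s0 : 0 < s by lra.
have q1 : 1 <= q by rewrite /q lerDl invr_ge0 ltW.
have Bs : B <= a `^ s.
  rewrite /B ler_pdivrMr; last nra.
  by move: thas; rewrite powRD ?(gt_eqF a0) ?implybT // -[2]/(2%:R) powR_mulrn ?expr2 // ltW.
have Bq : B `^ q <= a * B.
  have B0 : 0 < B by lra.
  rewrite /q powRD ?(gt_eqF B0) ?implybT //.
  rewrite powRr1; last by lra.
  rewrite [a * B]mulrC ler_pM2l //.
  have si0 : 0 <= s^-1 by rewrite invr_ge0 ltW.
  have := @ge0_ler_powR R (s^-1) si0 B (a `^ s).
  rewrite !nnegrE => /(_ (ltW (lt_trans ltr01 B1)) (powR_ge0 _ _) Bs).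
  by rewrite -powRrM divff ?gt_eqF // powRr1 // ltW.
have uqv : u `^ q <= v.
  have uBB : 1 <= u <= B by rewrite u1 uB.
  refine (le_trans (chord _ _ _ q1 B1 uBB) _).
  have t0 : 0 <= (u - 1) / (B - 1) by apply: divr_ge0; lra.
  have h1 : (u - 1) / (B - 1) * (B `^ q - 1) <= (u - 1) / (B - 1) * (a * B - 1).
    by apply: ler_wpM2l => //; lra.
  have eX : (u - 1) / (B - 1) * (a * B - 1) = (p - a) * (th - a) / (th - a * a).
    rewrite /u /B; field; apply/andP; split; rewrite ?subr_eq0 gt_eqF //; lra.
  have hX : (p - a) * (th - a) / (th - a * a) <= (y - a) / a.
    rewrite ler_pdivrMr ?subr_gt0 // mulrAC ler_pdivlMr //; nra.
  have ev : v = 1 + (y - a) / a by rewrite /v; field; rewrite gt_eqF.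
  rewrite ev; lra.
have u0 : 0 <= u by lra.
have v0 : 0 < v by rewrite /v divr_gt0 //; lra.
have h1 : u `^ (s + 1) <= v `^ s.
  have -> : s + 1 = q * s by rewrite /q mulrDl mul1r mulVf ?gt_eqF.
  rewrite powRrM; apply: ge0_ler_powR; rewrite ?nnegrE ?powR_ge0 //; lra.
have h2 : u `^ (s + 1) = u * u `^ s.
  rewrite powRD; last by rewrite gt_eqF ?implybT //; lra.
  by rewrite powRr1 // mulrC.
have h3 : (p / y) `^ s * v `^ s = u `^ s.
  rewrite -powRM; last (by lra); last by apply: divr_ge0; lra.
  congr (_ `^ _); rewrite /u /v; field; rewrite !gt_eqF //; lra.
have vs0 : 0 < v `^ s by apply: powR_gt0.
have pe : p = a * u by rewrite /u; field; rewrite gt_eqF.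
rewrite {1}pe -mulrA -[X in _ <= X]mulr1 ler_pM2l //.
by rewrite -(ler_pM2r vs0) mul1r -mulrA h3 -h2.
Qed.

Lemma calE_facts (p y : R) : 0 < p -> 0 < y ->
  [/\ 0 < calE p y, calE p y <= 1, p * calE p y <= y & (p < y -> calE p y = p / y)].
Proof.
move=> p0 y0; rewrite /calE; split.
- by rewrite lt_min !divr_gt0.
- rewrite ge_min !ler_pdivrMr // !mul1r; case: (lerP p y) => //; lra.
- rewrite -ler_pdivlMl // ge_min; apply/orP; right; rewrite mulrC; lra.
- move=> py; apply/min_idPl; rewrite ler_pdivrMr // mulrAC ler_pdivlMr //; nra.
Qed.

Lemma phiE (th r y : R) : 1 < r * th -> r * th < th -> r < 1 ->
  varphi th r y = r * th + (th - r * th * (r * th)) * (y - r * th) / (r * th * (th - r * th)).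
Proof.
move=> a1 ath r1; rewrite /varphi.
have th0 : th != 0 by apply/negP => /eqP E; move: a1; rewrite E mulr0; lra.
have r0 : r != 0 by apply/negP => /eqP E; move: a1; rewrite E mul0r; lra.
field; rewrite th0 r0 /= !subr_eq0; apply/andP; split; apply/negP => /eqP; lra.
Qed.

Lemma pointwise (th r p y pay : R) :
  1 < th -> th^-1 < r -> r * r * th <= 1 -> 1 <= p <= th -> 1 <= y <= th ->
  (Phi1 th r y <= p -> Phi1 th r y <= pay) -> (p < Phi1 th r y -> pay = 1) ->
  p / (r * th) * calE p y `^ sexp th r <= pay.
Proof.
move=> th1 thr rrth /andP[p1 pth] /andP[y1 yth] hA hB.
have th0 : 0 < th by lra.
have a1 : 1 < r * th by rewrite -(mulVf (negbT (gt_eqF th0))) ltr_pM2r.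
set a := r * th in a1 *.
have r0 : 0 < r.
  by rewrite -(ltr_pM2r th0) mul0r -/a; lra.
have aa : a * a <= th.
  by rewrite /a -[X in _ <= X]mul1r; apply: le_trans (ler_wpM2r (ltW th0) rrth); rewrite le_eqVlt; apply/orP; left; apply/eqP; ring.
have ath : a < th by nra.
have r1 : r < 1 by rewrite -(ltr_pM2r th0) mul1r -/a.
set s := sexp th r.
have s1 : 1 <= s by rewrite /s /sexp le_max lexx.
have a0 : 0 < a by lra.
have thas : th <= a `^ (s + 2).
  have la : 0 < ln a by apply: ln_gt0.
  rewrite /powR gt_eqF // -[X in X <= _]lnK ?posrE // ler_expR.
  have : ln th / ln a - 2 <= s by rewrite /s /sexp le_max lexx orbT.
  rewrite -ler_pdivrMr //; lra.
have [E0 E1 pE Epy] := calE_facts _ _ (lt_le_trans ltr01 p1) (lt_le_trans ltr01 y1).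
have Es : calE p y `^ s <= calE p y by apply: ge1r_powR => //; rewrite E0.
have Es0 : 0 <= calE p y `^ s by apply: powR_ge0.
pose K := (th - a * a) / (a * (th - a)).
have K0 : 0 <= K by apply: divr_ge0; nra.
have K1 : K <= 1 by rewrite /K ler_pdivrMr; nra.
have phK : varphi th r y = a + K * (y - a).
  rewrite (phiE _ _ y a1 ath r1) -/a /K; field; rewrite !subr_eq0 !gt_eqF //; lra.
have pa0 : 0 <= p / a by apply: divr_ge0; lra.
case: (lerP (Phi1 th r y) p) => hp.
  refine (le_trans _ (hA hp)).
  have hv : varphi th r y <= Phi1 th r y by rewrite /Phi1 le_max lexx orbT.
  refine (le_trans _ hv).
  have h1 : p / a * calE p y `^ s <= p / a * calE p y by apply: ler_wpM2l.
  refine (le_trans h1 _).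
  have h2 : p / a * calE p y <= y / a by rewrite mulrAC ler_pM2r ?invr_gt0.
  refine (le_trans h2 _).
  rewrite ler_pdivrMr // phK.
  have -> : (a + K * (y - a)) * a = y + a * (a - 1) * (th - y) / (th - a).
    by rewrite /K; field; rewrite !subr_eq0 !gt_eqF //; lra.
  rewrite lerDl; apply: divr_ge0; [apply: mulr_ge0; [apply: mulr_ge0|]|]; lra.
rewrite (hB hp).
case: (lerP p a) => pa.
  have : p / a <= 1 by rewrite ler_pdivrMr // mul1r.
  have : calE p y `^ s <= 1 by lra.
  nra.
have php : p < varphi th r y.
  by move: hp; rewrite /Phi1 lt_max ltNge (ltW pa) /=.
have yp : p < y.
  rewrite ltNge; apply/negP => yp; move: php; rewrite phK.
  case: (lerP a y) => ay; nra.
have key : (p - a) * a * (th - a) < (th - a * a) * (y - a).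
  move: php; rewrite phK -ltrBlDl /K mulrAC ltr_pdivlMr; last by nra.
  by rewrite mulrA.
have := core a1 aa s1 thas pa yth key.
rewrite Epy // => h.
by rewrite mulrAC ler_pdivrMr // mul1r.
Qed.

Lemma tp_ge thr (s : seq R) : (exists2 x, x \in s & thr <= x) ->
  thr <= threshold_payoff thr s.
Proof.
elim: s => [|x s IH] [z]; first by rewrite in_nil.
rewrite in_cons => /orP[/eqP -> | zs] hz /=.
  by rewrite hz.
case: ifP => // _; apply: IH; by exists z.
Qed.

Lemma tp_one thr (s : seq R) : (forall x, x \in s -> x < thr) ->
  threshold_payoff thr s = 1.
Proof.
elim: s => //= x s IH H.
rewrite leNgt H ?mem_head //= IH // => z zs; apply: H; by rewrite in_cons zs orbT.
Qed.

Lemma bigmax_ge (I : eqType) (F : I -> R) (s : seq I) i : i \in s ->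
  F i <= \big[Num.max/1]_(j <- s) F j.
Proof.
elim: s => [|x s IH]; first by rewrite in_nil.
rewrite in_cons big_cons => /orP[/eqP -> | ins]; rewrite le_max ?lexx //.
by rewrite IH ?orbT.
Qed.

Lemma maxprice_ge n (p : 'I_n -> R) i : p i <= maxprice p.
Proof. exact: (@bigmax_ge _ p _ _ (mem_index_enum i)). Qed.

Lemma maxprice_lt n (p : 'I_n -> R) c : 1 < c -> (forall i, p i < c) -> maxprice p < c.
Proof.
move=> c1 H; rewrite /maxprice; apply: (big_ind (fun x => x < c)) => //.
by move=> x y hx hy; rewrite gt_max hx hy.
Qed.

Lemma A1_ge th r n (p : 'I_n.+1 -> R) y : 1 < Phi1 th r y ->
  Phi1 th r y <= maxprice p -> Phi1 th r y <= A1 th r p y.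
Proof.
move=> t1 tm; rewrite /A1; apply: tp_ge.
case: (boolP [exists i, Phi1 th r y <= p i]).
  move=> /existsP[i hi]; exists (p i) => //; apply: map_f; by rewrite mem_enum.
move=> /existsPn H.
have : maxprice p < Phi1 th r y.
  by apply: maxprice_lt => // i; rewrite ltNge H.
by rewrite ltNge tm.
Qed.

Lemma A1_one th r n (p : 'I_n.+1 -> R) y :
  maxprice p < Phi1 th r y -> A1 th r p y = 1.
Proof.
move=> mt; rewrite /A1; apply: tp_one => x /mapP[i _ ->].
exact: (le_lt_trans (maxprice_ge _ p i) mt).
Qed.
End S.

Section M.
Context (R : realType) (d : measure_display) (T : measurableType d).

Lemma varphi_homo (th r : R) : 0 < r * th -> r < 1 -> r * r * th <= 1 ->
  {homo varphi th r : x y / x <= y}.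
Proof.
move=> a0 r1 rr x y xy; rewrite /varphi lerD2l ler_wpM2l //.
  apply: divr_ge0; last lra.
  by rewrite subr_ge0 expr2.
by rewrite ler_pM2r ?invr_gt0.
Qed.

Lemma Phi1_homo (th r : R) : 0 < r * th -> r < 1 -> r * r * th <= 1 ->
  {homo Phi1 th r : x y / x <= y}.
Proof.
move=> a0 r1 rr x y xy; rewrite /Phi1 ge_max !le_max lexx /=.
by rewrite (@varphi_homo th r a0 r1 rr x y xy) orbT.
Qed.

Lemma meas_bigmax k (P : T -> 'I_k -> R) (s : seq 'I_k) :
  (forall i, measurable_fun setT (fun w => P w i)) ->
  measurable_fun setT (fun w => \big[Num.max/1]_(i <- s) P w i).
Proof.
move=> HP; elim: s => [|i s IH].
  have -> : (fun w => \big[Num.max/1]_(i <- [::]) P w i) = (fun=> 1).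
    by apply/funext => w; rewrite big_nil.
  exact: measurable_cst.
have -> : (fun w => \big[Num.max/1]_(j <- i :: s) P w j) =
   ((fun w => P w i) \max (fun w => \big[Num.max/1]_(j <- s) P w j)).
  by apply/funext => w; rewrite big_cons.
exact: measurable_realfun.measurable_maxr.
Qed.

Lemma meas_tp k (P : T -> 'I_k -> R) (thr : T -> R) (s : seq 'I_k) :
  (forall i, measurable_fun setT (fun w => P w i)) ->
  measurable_fun setT thr ->
  measurable_fun setT (fun w => threshold_payoff (thr w) [seq P w i | i <- s]).
Proof.
move=> HP Ht; elim: s => [|i s IH] /=.
  exact: measurable_cst.
apply: measurable_fun_ifT => //.
exact: measurable_realfun.measurable_fun_ler.
Qed.

Lemma tp_bounds (thr lo hi : R) (s : seq R) : (forall x, x \in s -> lo <= x <= hi) ->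
  lo <= 1 <= hi -> lo <= threshold_payoff thr s <= hi.
Proof.
elim: s => //= x s IH H h1; case: ifP => _; first by apply: H; rewrite mem_head.
by apply: IH => // z zs; apply: H; rewrite in_cons zs orbT.
Qed.

Lemma integ_bnd (mu : probability T R) (f : T -> R) c :
  measurable_fun setT f -> (forall w, 0 <= f w <= c) ->
  mu.-integrable setT (EFin \o f).
Proof.
move=> mf hb; apply: measurable_bounded_integrable => //.
  by have := @probability_setT _ _ _ mu; move=> /= ->; rewrite ltry.
exists c; split; first by rewrite num_real.
move=> M cM y _ /=; have /andP[h0 h1] := hb y; rewrite ger0_norm //; lra.
Qed.
End M.

Theorem corollary1 (R : realType) (d : measure_display) (T : measurableType d)
    (mu : probability T R) (theta r : R) (n : nat)
    (P : T -> 'I_n.+1 -> R) (Y : T -> R) (pstar : R) :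
  1 < theta ->
  theta^-1 < r -> r <= theta `^ (- 2^-1) ->
  (forall i, measurable_fun setT (fun w => P w i)) ->
  measurable_fun setT Y ->
  (forall w i, 1 <= P w i <= theta) ->
  (forall w, 1 <= Y w <= theta) ->
  1 <= pstar <= theta ->
  {ae mu, forall w, maxprice (P w) = pstar} ->
  (\int[mu]_w A1 theta r (P w) (Y w)) / (\int[mu]_w maxprice (P w))
    >= (r * theta)^-1 * (\int[mu]_w (calE pstar (Y w)) `^ (sexp theta r)).
Proof.
move=> th1 thr rle HP HY Pb Yb pb hae.
have th0 : 0 < theta by lra.
have a1 : 1 < r * theta by rewrite -(mulVf (negbT (gt_eqF th0))) ltr_pM2r.
have r0 : 0 < r by rewrite -(ltr_pM2r th0) mul0r; lra.
have rrth : r * r * theta <= 1.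
  move: rle; rewrite powRN powR12_sqrt ?(ltW th0) // => rle.
  have sq0 : 0 < Num.sqrt theta by rewrite sqrtr_gt0.
  have h : r * Num.sqrt theta <= 1 by rewrite -ler_pdivlMr // div1r.
  have e : r * r * theta = (r * Num.sqrt theta) ^+ 2.
    by rewrite exprMn sqr_sqrtr ?(ltW th0) // expr2.
  rewrite e; have : 0 <= r * Num.sqrt theta by rewrite mulr_ge0 // ltW.
  nra.
have r1 : r < 1 by nra.
have a0 : 0 < r * theta by lra.
set s := sexp theta r.
have p0 : 0 < pstar by lra.
pose f := fun w => A1 theta r (P w) (Y w).
pose M := fun w => maxprice (P w).
pose Es := fun w => calE pstar (Y w) `^ s.
pose g := fun w => pstar / (r * theta) * Es w.
have mPhi : measurable_fun setT (fun w => Phi1 theta r (Y w)).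
  exact: (measurableT_comp (measurable_realfun.nondecreasing_measurable measurableT (@Phi1_homo R theta r a0 r1 rrth)) HY).
have mf : measurable_fun setT f by exact: meas_tp.
have mM : measurable_fun setT M by exact: meas_bigmax.
have mEs : measurable_fun setT Es.
  pose h := fun z : R => Num.min (pstar / Num.max z 1) (z / pstar).
  have -> : Es = (fun z => z `^ s) \o h \o Y.
    apply/funext => w; rewrite /Es /h /calE /=.
    by have /andP[y1 _] := Yb w; rewrite (max_idPl y1).
  apply: (measurableT_comp (measurable_realfun.measurable_powR s)).
  apply: (measurableT_comp _ HY).
  apply: measurable_realfun.measurable_minr.
    apply: measurable_realfun.nonincreasing_measurable => // x y xy.
    rewrite ler_pM2l // lef_pV2 ?posrE ?lt_max ?ltr01 ?orbT //.
    by rewrite ge_max !le_max xy lexx orbT.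
  apply: measurable_realfun.nondecreasing_measurable => // x y xy.
  by rewrite ler_pM2r ?invr_gt0.
have mg : measurable_fun setT g.
  by apply: measurable_realfun.measurable_funM => //; exact: measurable_cst.
have fb : forall w, 0 <= f w <= theta.
  move=> w; rewrite /f /A1.
  have : 1 <= threshold_payoff (Phi1 theta r (Y w)) [seq P w i | i <- enum 'I_n.+1] <= theta.
    apply: tp_bounds; last by rewrite lexx ltW.
    by move=> x /mapP[i _ ->]; apply: Pb.
  move=> /andP[h1 h2]; apply/andP; split; lra.
have Mb : forall w, 0 <= M w <= theta.
  move=> w; have /andP[h1 _] := Pb w ord0.
  have h2 := @maxprice_ge R _ (P w) ord0.
  apply/andP; split; first by rewrite /M; lra.
  rewrite /M /maxprice; apply: (big_ind (fun x => x <= theta)).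
  - lra.
  - by move=> x y hx hy; rewrite ge_max hx hy.
  - by move=> i _; have /andP[] := Pb w i.
have Esb : forall w, 0 <= Es w <= 1.
  move=> w; have /andP[y1 _] := Yb w.
  have [E0 E1 _ _] := @calE_facts R _ _ p0 (lt_le_trans ltr01 y1).
  have s1 : 1 <= s by rewrite /s /sexp le_max lexx.
  have : Es w <= calE pstar (Y w) by apply: ge1r_powR => //; rewrite E0.
  rewrite /Es powR_ge0 /=; lra.
have gb : forall w, 0 <= g w <= pstar / (r * theta).
  move=> w; have /andP[h1 h2] := Esb w.
  have c0 : 0 <= pstar / (r * theta) by apply: divr_ge0; lra.
  rewrite /g mulr_ge0 //= -[X in _ <= X]mulr1; exact: ler_wpM2l.
have iF := @integ_bnd R d T mu f theta mf fb.
have iM := @integ_bnd R d T mu M theta mM Mb.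
have iE := @integ_bnd R d T mu Es 1 mEs Esb.
have iG := @integ_bnd R d T mu g _ mg gb.
have IM : Rintegral mu setT M = pstar.
  have -> : Rintegral mu setT M = Rintegral mu setT (fun _ => pstar).
    rewrite /Rintegral; congr fine; apply: ae_eq_integral => //.
    - by apply/measurable_realfun.measurable_EFinP.
    - by apply: filterS hae => w /= hw _; rewrite /M hw.
  rewrite Rintegral_cst //.
  by have := @probability_setT _ _ _ mu; move=> /= ->; rewrite mulr1.
have IG : Rintegral mu setT g = pstar / (r * theta) * Rintegral mu setT Es.
  by rewrite /g RintegralZl.
have Ile : Rintegral mu setT g <= Rintegral mu setT f.
  rewrite /Rintegral; apply: fine_le; try exact: integrable_fin_num.
  apply: ae_ge0_le_integral => //.
  - by move=> w _; rewrite lee_fin; have /andP[] := gb w.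
  - by apply/measurable_realfun.measurable_EFinP.
  - by move=> w _; rewrite lee_fin; have /andP[] := fb w.
  - by apply/measurable_realfun.measurable_EFinP.
  apply: filterS hae => w hw _; rewrite lee_fin.
  have Phi1a : 1 < Phi1 theta r (Y w).
    by rewrite /Phi1 lt_max a1.
  apply: (@pointwise R theta r pstar (Y w) (f w) th1 thr rrth pb (Yb w)).
  - by move=> h; apply: A1_ge => //; rewrite hw.
  - by move=> h; apply: A1_one; rewrite hw.
rewrite IM ler_pdivlMr //.
have -> : (r * theta)^-1 * Rintegral mu setT Es * pstar = Rintegral mu setT g.
  by rewrite IG; ring.
exact: Ile.
Qed.
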